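(* Let $0\le d\le r\le\min\{m,n\}$. If the $\mathfrak{S}_n\times\mathfrak{S}_m$-irreducible $V^\lambda\otimes V^\mu$ occurs in $R(\mathcal{Z}_{n,m,r})_d$, then $\lambda_1\le n+m-d-r$ and $\mu_1\le n+m-d-r$.
   Context: Fix positive integers $n,m$. $\mathbb{C}[\mathbf{x}_{n\times m}]$ is the polynomial ring in variables $x_{i,j}$; $\mathfrak{S}_n\times\mathfrak{S}_m$ acts by $(g,h)\cdot x_{i,j}=x_{g(i),h(j)}$ (permuting rows and columns of matrices). For finite stable $\mathcal{Z}\subseteq\mathrm{Mat}_{n\times m}(\mathbb{C})$, $R(\mathcal{Z})=\mathbb{C}[\mathbf{x}_{n\times m}]/\mathrm{gr}\,\mathbf{I}(\mathcal{Z})$, where $\mathbf{I}(\mathcal{Z})$ is the vanishing ideal and $\mathrm{gr}$ takes the ideal generated by top-degree homogeneous components of nonzero elements; it is a graded $\mathfrak{S}_n\times\mathfrak{S}_m$-module with components $R(\mathcal{Z})_d$. $\mathcal{Z}_{n,m,r}$ is the set of $n\times m$ $0/1$ matrices with exactly $r$ ones and at most one $1$ in each row and each column (rook placements with $r$ rooks). $V^\lambda$ denotes the Specht module indexed by $\lambda$. *)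

(* Defs.v *)
From HB Require Import structures.
From mathcomp Require Import all_boot all_order all_algebra all_fingroup.
From mathcomp Require Import algC.
From mathcomp Require Import mpoly.
Set Implicit Arguments. Unset Strict Implicit. Unset Printing Implicit Defensive.
Import Order.TTheory GRing.Theory Num.Theory.
Local Open Scope ring_scope.

Definition polyI (I : finType) := {mpoly algC[#|I|]}.

Definition var (I : finType) (i : I) : polyI I := 'X_(enum_rank i).

Definition rename (I : finType) (f : I -> I) (p : polyI I) : polyI I :=
  p \mPo [tuple var (f (enum_val k)) | k < #|I|].

Definition evalI (I : finType) (z : I -> algC) (p : polyI I) : algC :=
  p.@[fun k => z (enum_val k)].

(* p is homogeneous of total degree d (0 is homogeneous of every degree). *)
Definition homog_deg (I : finType) (d : nat) (p : polyI I) : bool :=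
  all [pred mo | mdeg mo == d] (msupp p).

Definition topcomp (I : finType) (p : polyI I) : polyI I :=
  \sum_(mo <- msupp p | mdeg mo == (msize p).-1) p@_mo *: 'X_[mo].

(* gr J : the ideal generated by the top-degree components of nonzero
   elements of J. *)
Definition in_gr (I : finType) (J : polyI I -> Prop) (p : polyI I) : Prop :=
  exists s : seq (polyI I * polyI I),
    (forall q, q \in s -> J q.2 /\ q.2 != 0) /\
    p = \sum_(q <- s) q.1 * topcomp q.2.

Definition MatVar (n m : nat) := ('I_n * 'I_m)%type.
Definition Cx (n m : nat) := polyI (MatVar n m).

Definition matact (n m : nat) (g : {perm 'I_n}) (h : {perm 'I_m}) (p : Cx n m) : Cx n m :=
  rename (fun ij : MatVar n m => (g ij.1, h ij.2)) p.

Definition vanishing (n m : nat) (Z : 'M[algC]_(n, m) -> Prop) (p : Cx n m) : Prop :=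
  forall M, Z M -> evalI (fun ij : MatVar n m => M ij.1 ij.2) p = 0.

Definition rook_placement (n m r : nat) (M : 'M[algC]_(n, m)) : Prop :=
  [/\ forall i j, M i j = 0 \/ M i j = 1,
      #|[set ij : 'I_n * 'I_m | M ij.1 ij.2 == 1]| = r,
      forall i, leq #|[set j | M i j == 1]| 1 &
      forall j, leq #|[set i | M i j == 1]| 1].

Definition is_partition (n : nat) (la : seq nat) : bool :=
  [&& sorted geq la, 0%N \notin la & sumn la == n].

(* Column of the k-th box of the Young diagram of la, boxes read row by row. *)
Fixpoint box_col (la : seq nat) (k : nat) : nat :=
  match la with
  | [::] => k
  | a :: la' => if (k < a)%N then k else box_col la' (k - a)
  end.

Definition YZVar (n m : nat) := ('I_n + 'I_m)%type.
Definition Cyz (n m : nat) := polyI (YZVar n m).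

(* Specht polynomial of the tableau of shape la whose k-th box (row reading)
   is filled with s k, in the variables v : 'I_n -> poly:
   product over columns of the Vandermonde determinants of column entries. *)
Definition specht_poly (R : comNzRingType) (n : nat) (la : seq nat)
    (v : 'I_n -> R) (s : {perm 'I_n}) : R :=
  \prod_(k : 'I_n) \prod_(l : 'I_n | (k < l)%N && (box_col la k == box_col la l))
     (v (s k) - v (s l)).

(* V^la (x) V^mu realized as the span of products of Specht polynomials in the
   y- and z-variables (Specht module realized by Specht polynomials). *)
Definition specht_tensor (n m : nat) (la mu : seq nat) (w : Cyz n m) : Prop :=
  exists c : {perm 'I_n} -> {perm 'I_m} -> algC,
    w = \sum_(s : {perm 'I_n}) \sum_(t : {perm 'I_m})
          c s t *: (specht_poly la (fun i => var (inl i : YZVar n m)) s *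
                    specht_poly mu (fun j => var (inr j : YZVar n m)) t).

Definition yzact (n m : nat) (g : {perm 'I_n}) (h : {perm 'I_m}) (p : Cyz n m) : Cyz n m :=
  rename (fun v : YZVar n m => match v with inl i => inl (g i) | inr j => inr (h j) end) p.

(* V^la (x) V^mu occurs in R(Z)_d = C[x]_d / (gr I(Z))_d : there is an
   S_n x S_m-equivariant linear map from V^la (x) V^mu into C[x]_d which stays
   injective after passing to the quotient by gr I(Z). *)
Definition occurs_in_R (n m : nat) (Z : 'M[algC]_(n, m) -> Prop) (d : nat)
    (la mu : seq nat) : Prop :=
  exists f : {linear Cyz n m -> Cx n m},
    [/\ forall w, specht_tensor la mu w -> homog_deg d (f w),
        forall g h w, specht_tensor la mu w -> f (yzact g h w) = matact g h (f w) &
        forall w, specht_tensor la mu w -> w != 0 -> ~ in_gr (vanishing Z) (f w)].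

(* Main.v *)
Require Import Defs.
From HB Require Import structures.
From mathcomp Require Import all_boot all_order all_algebra all_fingroup.
From mathcomp Require Import algC mpoly.
From mathcomp Require Import zify.
Set Implicit Arguments. Unset Strict Implicit. Unset Printing Implicit Defensive.
Import Order.TTheory GRing.Theory Num.Theory.
Local Open Scope ring_scope.

Section Basics.
Variable I : finType.

Lemma evalI_var (z : I -> algC) (i : I) : evalI z (var i) = z i.
Proof. by rewrite /evalI /var mevalXU enum_rankK. Qed.

Lemma evalI_rename (z : I -> algC) (f : I -> I) (p : polyI I) : evalI z (rename f p) = evalI (z \o f) p.
Proof.
rewrite /evalI /rename comp_mpoly_meval; apply: meval_eq => k.
by rewrite tnth_mktuple -/(evalI z _) evalI_var.
Qed.

Lemma evalIB z (p q : polyI I) : evalI z (p - q) = evalI z p - evalI z q.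
Proof. exact: mevalB. Qed.
Lemma evalID z (p q : polyI I) : evalI z (p + q) = evalI z p + evalI z q.
Proof. exact: mevalD. Qed.
Lemma evalIM z (p q : polyI I) : evalI z (p * q) = evalI z p * evalI z q.
Proof. exact: mevalM. Qed.
Lemma evalIZ z c (p : polyI I) : evalI z (c *: p) = c * evalI z p.
Proof. exact: mevalZ. Qed.
Lemma evalIC z c : evalI z (c%:MP : polyI I) = c.
Proof. exact: mevalC. Qed.
Lemma evalI_sum z (J : Type) (s : seq J) (P : pred J) (F : J -> polyI I) :
  evalI z (\sum_(j <- s | P j) F j) = \sum_(j <- s | P j) evalI z (F j).
Proof. by rewrite /evalI raddf_sum. Qed.
Lemma evalI_prod z (J : Type) (s : seq J) (P : pred J) (F : J -> polyI I) :
  evalI z (\prod_(j <- s | P j) F j) = \prod_(j <- s | P j) evalI z (F j).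
Proof. by rewrite /evalI rmorph_prod. Qed.

Lemma rename_var (f : I -> I) (i : I) : rename f (var i) = var (f i).
Proof. by rewrite /rename /var comp_mpolyXU -tnth_nth tnth_mktuple enum_rankK. Qed.

Lemma renameB (f : I -> I) (p q : polyI I) : rename f (p - q) = rename f p - rename f q.
Proof. exact: comp_mpolyB. Qed.
Lemma renameM (f : I -> I) (p q : polyI I) : rename f (p * q) = rename f p * rename f q.
Proof. exact: rmorphM. Qed.
Lemma rename_prod (f : I -> I) (J : Type) (s : seq J) (P : pred J) (F : J -> polyI I) :
  rename f (\prod_(j <- s | P j) F j) = \prod_(j <- s | P j) rename f (F j).
Proof. by rewrite /rename rmorph_prod. Qed.
Lemma rename_sum (f : I -> I) (J : Type) (s : seq J) (P : pred J) (F : J -> polyI I) :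
  rename f (\sum_(j <- s | P j) F j) = \sum_(j <- s | P j) rename f (F j).
Proof. by rewrite /rename raddf_sum. Qed.
Lemma renameZ (f : I -> I) c (p : polyI I) : rename f (c *: p) = c *: rename f p.
Proof. exact: comp_mpolyZ. Qed.
Lemma rename_ext (f g : I -> I) (p : polyI I) : f =1 g -> rename f p = rename g p.
Proof. by move=> fg; rewrite /rename; congr comp_mpoly; apply: eq_mktuple => k; rewrite fg. Qed.

End Basics.

Section Gr.
Variable I : finType.
Implicit Types P L : polyI I.

Lemma homog_msize d P : homog_deg d P -> (msize P <= d.+1)%N.
Proof.
move=> /allP H; rewrite msizeE; apply/bigmax_leqP_seq => mo Hmo _.
by have /eqP -> := H mo Hmo.
Qed.

Lemma homog_coef d P mo : homog_deg d P -> mdeg mo != d -> P@_mo = 0.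
Proof.
move=> /allP H Hd; apply/eqP; rewrite mcoeff_eq0; apply/negP => /H /= Hm.
by rewrite Hm in Hd.
Qed.

Lemma topcomp_sub d P L : homog_deg d P -> P != 0 -> (msize L <= d)%N ->
  topcomp (P - L) = P.
Proof.
move=> HP P0 HL.
have Lc mo : mdeg mo = d -> L@_mo = 0.
  by move=> Hm; apply/eqP; rewrite mcoeff_eq0 msize_mdeg_ge // Hm.
have Hs : msize (P - L) = d.+1.
  apply/anti_leq/andP; split.
    apply: leq_trans (msizeD_le _ _) _; rewrite msizeN geq_max homog_msize //.
    exact: leq_trans HL _.
  have : msupp P != [::] by rewrite msupp_eq0.
  case E: (msupp P) => [|mo s] // _.
  have Hmo : mo \in msupp P by rewrite E inE eqxx.
  have /allP /(_ mo Hmo) /eqP Hd := HP.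
  rewrite -Hd; apply: msize_mdeg_lt.
  by rewrite mcoeff_msupp mcoeffB (Lc _ Hd) subr0 -mcoeff_msupp.
apply/mpolyP => k; rewrite /topcomp Hs /= raddf_sum /=.
under eq_bigr do rewrite mcoeffZ mcoeffX.
have [Hk|Hk] := eqVneq (mdeg k) d; last first.
  rewrite (homog_coef HP Hk) big1 // => mo /eqP Hmo.
  by case: eqP => [Emo|]; [rewrite -Emo Hmo eqxx in Hk|rewrite mulr0].
have [kin|kout] := boolP (k \in msupp (P - L)).
  rewrite big_mkcond (bigD1_seq k) ?msupp_uniq //=. rewrite Hk !eqxx mulr1 big1 ?addr0.
    by rewrite mcoeffB (Lc _ Hk) subr0.
  by move=> mo nmo; rewrite eq_sym (negbTE nmo) mulr0; case: ifP.
rewrite big1_seq; last first.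
  by move=> mo /andP[_ Hmo]; case: eqP => [E|]; [rewrite -E Hmo in kout|rewrite mulr0].
move: kout; rewrite mcoeff_msupp negbK mcoeffB (Lc _ Hk) subr0 => /eqP ->.
by [].
Qed.

Lemma in_gr_lower (J : polyI I -> Prop) d P L :
  homog_deg d P -> (msize L <= d)%N -> J (P - L) -> in_gr J P.
Proof.
move=> HP HL HJ; have [->|P0] := eqVneq P 0.
  by exists [::]; split => [q|]; rewrite ?in_nil ?big_nil.
exists [:: (1, P - L)]; split.
  move=> q; rewrite inE => /eqP -> /=; split => //.
  apply/negP => /eqP E; have : P = L by apply/eqP; rewrite -subr_eq0 E.
  move=> PL; move: HL; rewrite -PL => HL.
  have : msupp P != [::] by rewrite msupp_eq0.
  case E2: (msupp P) => [|mo s] // _.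
  have Hmo : mo \in msupp P by rewrite E2 inE eqxx.
  have /allP /(_ mo Hmo) /eqP Hd := HP.
  by have := msize_mdeg_lt Hmo; rewrite Hd ltnNge HL.
by rewrite big_seq1 mul1r (topcomp_sub HP P0 HL).
Qed.

End Gr.

Section Deg.
Variable I : finType.
Definition dle (e : nat) (p : polyI I) := (msize p <= e.+1)%N.

Lemma dleM a b p q : dle a p -> dle b q -> dle (a + b) (p * q).
Proof.
rewrite /dle => Hp Hq.
have [->|p0] := eqVneq p 0; first by rewrite mul0r msize0.
have [->|q0] := eqVneq q 0; first by rewrite mulr0 msize0.
rewrite msizeM //.
have hp : (0 < msize p)%N by rewrite lt0n msize_poly_eq0.
have hq : (0 < msize q)%N by rewrite lt0n msize_poly_eq0.
rewrite -(prednK hp) -(prednK hq) in Hp Hq *.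
lia.
Qed.

Lemma dleD e p q : dle e p -> dle e q -> dle e (p + q).
Proof. by rewrite /dle => Hp Hq; apply: leq_trans (msizeD_le _ _) _; rewrite geq_max Hp Hq. Qed.

Lemma dleN e p : dle e p -> dle e (- p).
Proof. by rewrite /dle msizeN. Qed.

Lemma dleZ e c p : dle e p -> dle e (c *: p).
Proof. by move=> Hp; apply: leq_trans (msizeZ_le _ _) Hp. Qed.

Lemma dleC e c : dle e (c%:MP : polyI I).
Proof. by rewrite /dle msizeC; case: (c != 0). Qed.

Lemma dle_var (i : I) : dle 1 (var i).
Proof. by rewrite /dle /var msizeX mdeg1. Qed.

Lemma dleW a b p : (a <= b)%N -> dle a p -> dle b p.
Proof. by rewrite /dle => ab Hp; apply: leq_trans Hp _; rewrite ltnS. Qed.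

Lemma dle_sum e (J : Type) (s : seq J) (P : pred J) (F : J -> polyI I) :
  (forall j, P j -> dle e (F j)) -> dle e (\sum_(j <- s | P j) F j).
Proof.
move=> H; elim/big_rec: _ => [|j p Pj Hp]; first by rewrite /dle msize0.
exact: dleD (H _ Pj) Hp.
Qed.

Lemma dle_prod (J : Type) (s : seq J) (P : pred J) (F : J -> polyI I) (e : J -> nat) :
  (forall j, P j -> dle (e j) (F j)) ->
  dle (\sum_(j <- s | P j) e j)%N (\prod_(j <- s | P j) F j).
Proof.
move=> H; elim: s => [|j s IH]; first by rewrite !big_nil /dle msize1.
rewrite !big_cons; case: ifP => // Pj; exact: dleM (H _ Pj) IH.
Qed.

End Deg.

Lemma prod_ind (J : finType) (S : {pred J}) (P : pred J) :
  \prod_(j in S) ((P j)%:R : algC) = ([forall j in S, P j])%:R.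
Proof.
case: forallP => [H|H].
  by rewrite big1 // => j jS; have := H j; rewrite jS /= => ->.
have [j] : exists j, ~~ ((j \in S) ==> P j).
  by apply/existsP; rewrite -negb_forall; apply/negP => /forallP.
rewrite negb_imply => /andP[jS nP].
by rewrite (bigD1 j) //= (negbTE nP) mul0r.
Qed.

Lemma sum_ind (J : finType) (S : {pred J}) (P : pred J) :
  \sum_(j in S) ((P j)%:R : algC) = #|[set j in S | P j]|%:R.
Proof.
rewrite -sum1_card natr_sum big_mkcond /= [in RHS]big_mkcond /=.
by apply: eq_bigr => j _; rewrite inE; case: (j \in S); case: (P j).
Qed.

Section Core.
Variables (V T1 T2 : finType) (rho : V -> T1) (kap : V -> T2)
  (act : {perm T1} -> V -> V).
Hypotheses (rk_inj : forall v w, rho v = rho w -> kap v = kap w -> v = w)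
  (act_rho : forall g v, rho (act g v) = g (rho v))
  (act_kap : forall g v, kap (act g v) = kap v).
Variable r : nat.

Definition Zgen (z : V -> algC) : Prop :=
  [/\ forall v, z v = 0 \/ z v = 1, #|[set v | z v == 1]| = r,
      forall t, (#|[set v | (rho v == t) && (z v == 1%R)]| <= 1)%N &
      forall u, (#|[set v | (kap v == u) && (z v == 1%R)]| <= 1)%N].

Lemma r_act_inj g : injective (act g).
Proof.
move=> v w E; apply: rk_inj; last by rewrite -(act_kap g v) E act_kap.
by apply: (@perm_inj _ g); rewrite -!act_rho E.
Qed.

Lemma r_act_out (A : {set T1}) g v : g \in Sym A -> rho v \notin A -> act g v = v.
Proof.
rewrite inE => gA vA; apply: rk_inj; last by rewrite act_kap.
by rewrite act_rho (out_perm gA).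
Qed.

Lemma r_act_in (A : {set T1}) g v : g \in Sym A -> (rho (act g v) \in A) = (rho v \in A).
Proof. by rewrite inE act_rho => gA; rewrite perm_closed. Qed.

Section Z.
Variable z : V -> algC.
Hypothesis Hz : Zgen z.
Definition Ones := [set v | z v == 1].

Lemma z01 v : z v = (v \in Ones)%:R.
Proof.
case: Hz => H _ _ _; rewrite inE.
by case: (H v) => ->; rewrite ?eqxx // eq_sym oner_eq0.
Qed.

Lemma cardO : #|Ones| = r. Proof. by case: Hz. Qed.

Lemma rho_injO : {in Ones &, injective rho}.
Proof.
case: Hz => _ _ H _ v w vO wO E.
rewrite /Ones !inE in vO wO.
have /card_le1_eqP Hc := H (rho v); by symmetry; apply: Hc; rewrite inE ?E eqxx ?vO ?wO.
Qed.

Lemma kap_injO : {in Ones &, injective kap}.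
Proof.
case: Hz => _ _ _ H v w vO wO E.
rewrite /Ones !inE in vO wO.
have /card_le1_eqP Hc := H (kap v); by symmetry; apply: Hc; rewrite inE ?E eqxx ?vO ?wO.
Qed.

End Z.

Lemma Zgen_comp z g : Zgen z -> forall v, z (act g v) = 0 \/ z (act g v) = 1.
Proof. by case=> H _ _ _ v; apply: H. Qed.

Definition Smo (mo : 'X_{1.. #|V|}) := [set v : V | (0 < mo (enum_rank v))%N].

Lemma evalI_mono (z : V -> algC) mo : (forall v, z v = 0 \/ z v = 1) ->
  evalI z 'X_[mo] = \prod_(v in Smo mo) z v.
Proof.
move=> H; rewrite /evalI mevalX.
rewrite (reindex (@enum_rank V)) /=; last first.
  by exists (fun i : 'I_#|V| => enum_val i) => i _; rewrite ?enum_valK ?enum_rankK.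
rewrite [RHS]big_mkcond /=; apply: eq_bigr => v _; rewrite enum_rankK inE.
case: (mo (enum_rank v)) => [|k] //=.
by case: (H v) => ->; rewrite ?expr1n ?expr0n.
Qed.

Lemma card_Smo mo : (#|Smo mo| <= mdeg mo)%N.
Proof.
rewrite mdegE -sum1_card.
rewrite (reindex (fun i : 'I_#|V| => enum_val i)) /=; last first.
  by exists (@enum_rank V) => i _; rewrite ?enum_valK ?enum_rankK.
rewrite big_mkcond /=; apply: leq_sum => i _; rewrite inE enum_valK.
by case: (mo i).
Qed.

End Core.

Lemma ext_perm (T : finType) (A : {set T}) (p : seq (T * T)) :
  uniq (map fst p) -> uniq (map snd p) ->
  (forall xy, xy \in p -> (xy.1 \in A) && (xy.2 \in A)) ->
  exists h : {perm T}, perm_on A h /\ forall xy, xy \in p -> h xy.1 = xy.2.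
Proof.
elim: p => [|[x y] p IH] /=.
  by move=> _ _ _; exists 1%g; split => [|xy]; rewrite ?perm_on1 ?in_nil.
move=> /andP[xn u1] /andP[yn u2] HA.
have [h' [h'A h'p]] : exists h' : {perm T}, perm_on A h' /\ forall xy, xy \in p -> h' xy.1 = xy.2.
  by apply: IH => // xy xyp; apply: HA; rewrite inE xyp orbT.
have /andP[xA yA] := HA (x, y) (mem_head _ _).
set u := h' x.
have uA : u \in A by rewrite /u (perm_closed _ h'A).
exists (h' * tperm u y)%g; split.
  apply: perm_onM => //; apply: subset_trans (tperm_on u y) _.
  by apply/subsetP => t; rewrite !inE => /orP[] /eqP ->.
move=> [x' y']; rewrite inE => /orP[/eqP [-> ->]|xyp] /=.
  by rewrite permM tpermL.
rewrite permM (h'p _ xyp) /= tpermD //.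
  apply/eqP => E; move: (h'p _ xyp); rewrite /= -E /u => /perm_inj Ex.
  by move: xn; rewrite -Ex; case/negP; apply/mapP; exists (x', y').
by apply/eqP => E; move: yn; rewrite E; case/negP; apply/mapP; exists (x', y').
Qed.

Section Rook.
Variables (V T1 T2 : finType) (rho : V -> T1) (kap : V -> T2)
  (act : {perm T1} -> V -> V).
Hypotheses (rk_inj : forall v w, rho v = rho w -> kap v = kap w -> v = w)
  (act_rho : forall g v, rho (act g v) = g (rho v))
  (act_kap : forall g v, kap (act g v) = kap v).
Variables (r d : nat) (A : {set T1}) (S : {set V}).
Hypotheses (HSr : {in S &, injective rho}) (HSk : {in S &, injective kap})
  (HSd : #|S| = d) (Hb : (#|T1| - #|A| + (#|T2| - d) < r)%N).

Definition SA := [set v in S | rho v \in A].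
Definition SB := [set v in S | rho v \notin A].
Definition bb := #|SA|.
Definition Om := [set v | (rho v \notin A) || (kap v \notin kap @: S)].
Definition Ypol : polyI V := \sum_(v in Om) var v.
Definition Qpol : polyI V :=
  \prod_((r - bb).+1 <= t < r) (((t%:R - (r - bb)%:R)^-1 : algC) *: ((t%:R)%:MP - Ypol)).
Definition Stab := [set g in Sym A | [forall v in SA, g (rho v) == rho v]].
Definition Lr : polyI V :=
  if (bb == 0%N) || (r < bb)%N then 0 else #|Stab|%:R *: ((\prod_(v in SB) var v) * Qpol).

Lemma cardSAB : (#|SA| + #|SB| = d)%N.
Proof.
rewrite -HSd -(cardsID [set v | rho v \in A] S); congr (_ + _)%N; apply: eq_card => v;
by rewrite !inE // andbC.
Qed.

Lemma Lr_deg : (msize Lr <= d)%N.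
Proof.
rewrite /Lr; case: ifP => [_|/norP[/eqP b0 _]]; first by rewrite msize0.
have : dle (#|SB| + (bb - 1)) ((\prod_(v in SB) var v) * Qpol).
  apply: dleM.
    have := @dle_prod _ _ (index_enum V) (fun v => v \in SB) (fun v => var v) (fun _ => 1%N).
    by rewrite sum1_card; apply => v _; apply: dle_var.
  apply: (@dleW _ (\sum_((r - bb).+1 <= t < r) 1)%N); last first.
    apply: dle_prod => t _; apply: dleZ; apply: dleD; first exact: dleC.
    apply: dleN; apply: dle_sum => v _; exact: dle_var.
  rewrite sum_nat_const_nat muln1; lia.
move/(dleZ (#|Stab|%:R)); rewrite /dle => H; apply: leq_trans H _.
have := cardSAB; rewrite /bb in b0 *; lia.
Qed.


Lemma Lr_eval z : Zgen rho kap r z ->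
  \sum_(g in Sym A) \prod_(v in S) z (act g v) = evalI z Lr.
Proof.
move=> Hz.
set good := [set g in Sym A | [forall v in S, act g v \in Ones z]].
have -> : \sum_(g in Sym A) \prod_(v in S) z (act g v) = #|good|%:R.
  rewrite -sum_ind; apply: eq_bigr => g _.
  by rewrite -prod_ind; apply: eq_bigr => v _; rewrite (z01 Hz).
have SBout g v : g \in Sym A -> v \in SB -> act g v = v.
  by move=> gA; rewrite inE => /andP[_ vA]; apply: (r_act_out rk_inj act_rho act_kap gA vA).
have [sub|/subsetPn [v vSB vO]] := boolP (SB \subset Ones z); last first.
  have -> : good = set0.
    have vS : v \in S by move: vSB; rewrite inE => /andP[].
    apply/setP => g; rewrite inE [in RHS]inE; apply/negP => /andP[gA /forallP /(_ v) /implyP /(_ vS)].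
    by rewrite SBout // (negbTE vO).
  rewrite cards0 /Lr; case: ifP => _; first by rewrite /evalI meval0.
  rewrite evalIZ evalIM evalI_prod (bigD1 v) //= evalI_var (z01 Hz) (negbTE vO).
  by rewrite !mul0r mulr0.
have rO := rho_injO Hz; have kO := kap_injO Hz.
set X := #|Ones z :\: Om|; set Y := #|Ones z :&: Om|.
have hXY : (Y + X = r)%N by rewrite /X /Y cardsID (cardO Hz).
have hY : (Y < r)%N.
  set P1 := [set v in Ones z | rho v \notin A].
  set P2 := [set v in Ones z | kap v \notin kap @: S].
  have s12 : Ones z :&: Om \subset P1 :|: P2.
    apply/subsetP => v; rewrite !inE => /andP[H1 H2]; rewrite H1 /=; exact: H2.
  have c1 : (#|P1| <= #|~: A|)%N.
    rewrite -(card_in_imset (f := rho)); last first.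
      by move=> v w; rewrite !inE => /andP[vO _] /andP[wO _]; apply: rO; rewrite inE.
    by apply: subset_leq_card; apply/subsetP => t /imsetP [v]; rewrite !inE => /andP[_ ?] ->.
  have c2 : (#|P2| <= #|~: (kap @: S)|)%N.
    rewrite -(card_in_imset (f := kap)); last first.
      by move=> v w; rewrite !inE => /andP[vO _] /andP[wO _]; apply: kO; rewrite inE.
    by apply: subset_leq_card; apply/subsetP => t /imsetP [v]; rewrite !inE => /andP[_ ?] ->.
  have cA := cardsC A; have cK := cardsC (kap @: S).
  have kS : #|kap @: S| = d by rewrite card_in_imset.
  have := subset_leq_card s12; have := (leq_card_setU P1 P2).1.
  rewrite /Y; lia.
have cX : #|kap @: (Ones z :\: Om)| = X.
  rewrite /X card_in_imset //.
  by move=> v w; rewrite !inE => /andP[_ vO] /andP[_ wO]; apply: kO; rewrite inE.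
have subK : kap @: (Ones z :\: Om) \subset kap @: SA.
  apply/subsetP => k /imsetP [v]; rewrite !inE negb_or !negbK => /andP[/andP[vA /imsetP[w wS kw]] vO] ->.
  have [wA|wA] := boolP (rho w \in A).
    by apply/imsetP; exists w; rewrite ?inE ?wS ?wA.
  have wO : w \in Ones z by apply: (subsetP sub); rewrite inE wS.
  by move: vA; rewrite (kO v w _ wO kw) ?(negbTE wA) ?inE.
have cSA : #|kap @: SA| = bb.
  rewrite card_in_imset // => v w; rewrite !inE => /andP[vS _] /andP[wS _]; exact: HSk.
have hX : (X <= bb)%N by rewrite -cX -cSA subset_leq_card.
have goodsub g : g \in good -> act g @: SA \subset Ones z :\: Om.
  rewrite inE => /andP[gA /forallP gO]; apply/subsetP => u /imsetP[v vSA ->].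
  move: vSA; rewrite inE => /andP[vS vA].
  have := gO v; rewrite vS /= => agO.
  rewrite inE agO andbT inE negb_or !negbK (r_act_in act_rho _ gA) vA /= act_kap.
  by apply/imsetP; exists v.
have EY : evalI z Ypol = Y%:R.
  rewrite /Ypol evalI_sum; under eq_bigr do rewrite evalI_var (z01 Hz).
  rewrite sum_ind /Y; congr (_%:R); apply: eq_card => v; rewrite !inE andbC.
  by [].
have [XB|XB] := ltnP X bb.
  have -> : good = set0.
    apply/eqP; rewrite -subset0; apply/subsetP => g /goodsub /subset_leq_card.
    rewrite card_imset; last first.
      exact: (r_act_inj rk_inj act_rho act_kap).
    by rewrite -/bb -/X leqNgt XB.
  rewrite cards0 /Lr; case: ifP => [_|/norP [b0 br]]; first by rewrite /evalI meval0.
  rewrite -leqNgt in br.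
  rewrite evalIZ evalIM /Qpol evalI_prod (bigD1_seq Y) /=; last exact: iota_uniq.
    by rewrite evalIM evalIZ evalIB evalIC EY subrr !mulr0 !mul0r !mulr0.
  rewrite mem_index_iota; apply/andP; split; lia.
have b0 : bb != 0%N by apply/eqP => b0; move: hX; rewrite b0; lia.
have br : (r < bb)%N = false by apply/negbTE; rewrite -leqNgt; lia.
rewrite /Lr (negbTE b0) br /= evalIZ evalIM evalI_prod.
have -> : \prod_(v in SB) evalI z (var v) = 1.
  by apply: big1 => v vSB; rewrite evalI_var (z01 Hz) (subsetP sub v vSB).
rewrite /Qpol evalI_prod; under eq_bigr do rewrite evalIZ evalIB evalIC EY.
rewrite mul1r.
have XE : X = bb by apply/anti_leq; rewrite hX XB.
rewrite big_seq big1 ?mulr1; last first.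
  move=> t; rewrite mem_index_iota => Ht.
  have -> : Y = (r - bb)%N by lia.
  rewrite mulVf // subr_eq0 eqr_nat; apply/eqP; lia.
congr (_%:R).
have eqK : kap @: (Ones z :\: Om) = kap @: SA.
  by apply/eqP; rewrite eqEcard subK /= cSA cX XE.
pose uf v := odflt v [pick u in Ones z :\: Om | kap u == kap v].
have huf v : v \in SA -> (uf v \in Ones z :\: Om) && (kap (uf v) == kap v).
  move=> vSA; rewrite /uf; case: pickP => [u /andP[-> ->] //|none].
  have : kap v \in kap @: (Ones z :\: Om) by rewrite eqK; apply/imsetP; exists v.
  by case/imsetP => u uin ku; have := none u; rewrite uin ku eqxx.
have ufO v : v \in SA -> uf v \in Ones z.
  by move=> /huf /andP[]; rewrite inE => /andP[].
have ufk v : v \in SA -> kap (uf v) = kap v by move=> /huf /andP[_ /eqP].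
have SAS v : v \in SA -> v \in S by rewrite inE => /andP[].
have SAA v : v \in SA -> rho v \in A by rewrite inE => /andP[].
have [h [hA hp]] : exists h : {perm T1}, perm_on A h /\
    forall xy, xy \in [seq (rho v, rho (uf v)) | v <- enum SA] -> h xy.1 = xy.2.
  apply: ext_perm.
  - rewrite -map_comp map_inj_in_uniq ?enum_uniq //.
    by move=> v w; rewrite !mem_enum => /SAS vS /SAS wS; apply: HSr.
  - rewrite -map_comp map_inj_in_uniq ?enum_uniq //.
    move=> v w; rewrite !mem_enum => vSA wSA /= E.
    have E2 := rO _ _ (ufO _ vSA) (ufO _ wSA) E.
    by apply: HSk; rewrite ?SAS // -(ufk _ vSA) -(ufk _ wSA) E2.
  - move=> xy /mapP [v]; rewrite mem_enum => vSA -> /=.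
    rewrite SAA //; move: (huf v vSA) => /andP[]; rewrite !inE negb_or !negbK.
    by case/andP => /andP[].
have hh v : v \in SA -> h (rho v) = rho (uf v).
  by move=> vSA; apply: (hp (rho v, rho (uf v))); apply/mapP; exists v; rewrite ?mem_enum.
have hS : h \in Sym A by rewrite inE.
have -> : good = (Stab :* h)%g.
  apply/setP => g; rewrite mem_rcoset !inE.
  have hV : perm_on A h^-1%g := perm_onV hA.
  have gAeq : perm_on A (g * h^-1)%g = perm_on A g.
    apply/idP/idP => H; last exact: perm_onM H hV.
    by rewrite -(mulgKV h g); apply: perm_onM H hA.
  rewrite gAeq; case gA: (perm_on A g) => //=.
  have gS : g \in Sym A by rewrite inE.
  apply/forallP/forallP => H v; apply/implyP => vX.
    have vS := SAS v vX.
    have agO := implyP (H v) vS.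
    have E : act g v = uf v by apply: kO => //; [exact: ufO | rewrite act_kap ufk].
    by rewrite permM -act_rho E -hh // permK eqxx.
  have [vA|vA] := boolP (rho v \in A).
    have vSA : v \in SA by rewrite inE vX vA.
    have /eqP := implyP (H v) vSA; rewrite permM => E1.
    have E2 : g (rho v) = h (rho v) by rewrite -[in RHS]E1 permKV.
    have -> : act g v = uf v.
      by apply: rk_inj; rewrite ?act_rho ?E2 ?hh ?act_kap ?ufk.
    exact: ufO.
  rewrite (r_act_out rk_inj act_rho act_kap gS vA).
  by apply: (subsetP sub); rewrite inE vX vA.
exact: card_rcoset.
Qed.

End Rook.

Section Mono.
Variables (V T1 T2 : finType) (rho : V -> T1) (kap : V -> T2)
  (act : {perm T1} -> V -> V).
Hypotheses (rk_inj : forall v w, rho v = rho w -> kap v = kap w -> v = w)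
  (act_rho : forall g v, rho (act g v) = g (rho v))
  (act_kap : forall g v, kap (act g v) = kap v).
Variables (r d : nat) (A : {set T1}).
Hypothesis (Hb : (#|T1| - #|A| + (#|T2| - d) < r)%N).

Lemma noninj_zero (f : V -> T1 + T2) (S : {set V}) z g v w :
  Zgen rho kap r z -> (forall v w, f v = f w -> f (act g v) = f (act g w)) ->
  (forall v w, v \in Ones z -> w \in Ones z -> f v = f w -> v = w) ->
  v \in S -> w \in S -> v != w -> f v = f w ->
  \prod_(u in S) z (act g u) = 0.
Proof.
move=> Hz fact finj vS wS vw fvw.
rewrite (bigD1 v) //= (bigD1 w) /=; last by rewrite wS eq_sym.
rewrite (z01 Hz (act g v)) (z01 Hz (act g w)).
case vO: (act g v \in Ones z); case wO: (act g w \in Ones z); rewrite ?mul0r ?mulr0 //.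
have := finj _ _ vO wO (fact _ _ fvw) => /(r_act_inj rk_inj act_rho act_kap) E.
by rewrite E eqxx in vw.
Qed.

Lemma mono_case (S : {set V}) : (#|S| <= d)%N ->
  exists L : polyI V, (msize L <= d)%N /\ forall z, Zgen rho kap r z ->
    \sum_(g in Sym A) \prod_(v in S) z (act g v) = evalI z L.
Proof.
move=> Sd; have [Slt|Sge] := ltnP #|S| d.
  exists (\sum_(g in Sym A) \prod_(v in S) var (act g v)); split.
    have : dle #|S| (\sum_(g in Sym A) \prod_(v in S) var (act g v)).
      apply: dle_sum => g _.
      have := @dle_prod _ _ (index_enum V) (fun v => v \in S) (fun v => var (act g v)) (fun _ => 1%N).
      by rewrite sum1_card; apply => v _; apply: dle_var.
    by rewrite /dle => H; apply: leq_trans H Slt.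
  move=> z Hz; rewrite evalI_sum; apply: eq_bigr => g _.
  by rewrite evalI_prod; apply: eq_bigr => v _; rewrite evalI_var.
have HSd : #|S| = d by apply/anti_leq; rewrite Sd Sge.
have [Hr|Hr] := boolP [forall v in S, forall w in S, (rho v == rho w) ==> (v == w)];
 last first.
  exists 0; split; first by rewrite msize0.
  move=> z Hz; rewrite /evalI meval0; apply: big1 => g _.
  move: Hr; rewrite negb_forall => /existsP [v]; rewrite negb_imply => /andP[vS H1].
  move: H1; rewrite negb_forall => /existsP [w]; rewrite negb_imply => /andP[wS H2].
  move: H2; rewrite negb_imply => /andP[/eqP rvw vw].
  apply: (noninj_zero (f := fun v => inl (rho v)) Hz _ _ vS wS vw).
  - by move=> x y [] E; rewrite !act_rho E.
  - by move=> x y xO yO [] E; apply: (rho_injO Hz).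
  - by rewrite rvw.
have [Hk|Hk] := boolP [forall v in S, forall w in S, (kap v == kap w) ==> (v == w)];
 last first.
  exists 0; split; first by rewrite msize0.
  move=> z Hz; rewrite /evalI meval0; apply: big1 => g _.
  move: Hk; rewrite negb_forall => /existsP [v]; rewrite negb_imply => /andP[vS H1].
  move: H1; rewrite negb_forall => /existsP [w]; rewrite negb_imply => /andP[wS H2].
  move: H2; rewrite negb_imply => /andP[/eqP kvw vw].
  apply: (noninj_zero (f := fun v => inr (kap v)) Hz _ _ vS wS vw).
  - by move=> x y [] E; rewrite !act_kap E.
  - by move=> x y xO yO [] E; apply: (kap_injO Hz).
  - by rewrite kvw.
have HSr : {in S &, injective rho}.
  move=> v w vS wS E; move/forallP: Hr => /(_ v); rewrite vS /= => /forallP /(_ w).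
  by rewrite wS E eqxx /= => /eqP.
have HSk : {in S &, injective kap}.
  move=> v w vS wS E; move/forallP: Hk => /(_ v); rewrite vS /= => /forallP /(_ w).
  by rewrite wS E eqxx /= => /eqP.
exists (Lr rho kap r A S); split.
  by apply: Lr_deg.
move=> z Hz; apply: Lr_eval => //.
by rewrite HSd.
Qed.

End Mono.

Section Homog.
Variable I : finType.

Lemma homogE d (p : polyI I) : homog_deg d p = (p \is ishomog1 d mdeg).
Proof. by rewrite dhomogE. Qed.

Lemma homog_rename d (f : I -> I) (p : polyI I) :
  homog_deg d p -> homog_deg d (rename f p).
Proof.
rewrite !homogE => Hp; rewrite [p]mpolyE /rename raddf_sum /=.
rewrite big_seq; apply: rpred_sum => mo mon; rewrite comp_mpolyZ; apply: rpredZ.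
have -> : d = mdeg mo by have /dhomogP := Hp; move/(_ mo mon) => ->.
rewrite comp_mpolyX mdegE.
elim/big_rec2: _ => [|i e q _ Hq]; first exact: dhomog1.
apply: dhomogM Hq; rewrite tnth_mktuple.
have H1 : var (f (enum_val i)) \is ishomog1 1 mdeg.
  by rewrite /var dhomogX; apply/eqP; exact: mdeg1.
by have := dhomogMn (mo i) H1; rewrite mul1n.
Qed.

Lemma homog_sum d (J : Type) (s : seq J) (P : pred J) (F : J -> polyI I) :
  (forall j, P j -> homog_deg d (F j)) -> homog_deg d (\sum_(j <- s | P j) F j).
Proof.
move=> H; rewrite homogE; apply: rpred_sum => j Pj; rewrite -homogE; exact: H.
Qed.

End Homog.

Section Core2.
Variables (V T1 T2 : finType) (rho : V -> T1) (kap : V -> T2)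
  (act : {perm T1} -> V -> V).
Hypotheses (rk_inj : forall v w, rho v = rho w -> kap v = kap w -> v = w)
  (act_rho : forall g v, rho (act g v) = g (rho v))
  (act_kap : forall g v, kap (act g v) = kap v).
Variables (r d : nat) (A : {set T1}).
Hypothesis (Hb : (#|T1| - #|A| + (#|T2| - d) < r)%N).

Definition Zvan (p : polyI V) := forall z, Zgen rho kap r z -> evalI z p = 0.

Lemma core_gr (q : polyI V) : homog_deg d q ->
  in_gr Zvan (\sum_(g in Sym A) rename (act g) q).
Proof.
move=> Hq.
have HP : homog_deg d (\sum_(g in Sym A) rename (act g) q).
  by apply: homog_sum => g _; apply: homog_rename.
have [L [HL HE]] : exists L : polyI V, (msize L <= d)%N /\ forall z, Zgen rho kap r z ->
    evalI z (\sum_(g in Sym A) rename (act g) q) = evalI z L.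
  have Hs : forall s : seq 'X_{1.. #|V|}, (forall mo, mo \in s -> mdeg mo = d) ->
      exists L : polyI V, (msize L <= d)%N /\ forall z, Zgen rho kap r z ->
      \sum_(mo <- s) q@_mo * \sum_(g in Sym A) \prod_(v in Smo mo) z (act g v) = evalI z L.
    elim => [|mo s IH] Hs.
      by exists 0; split => [|z _]; rewrite ?msize0 // big_nil /evalI meval0.
    have [L1 [HL1 HE1]] : exists L : polyI V, (msize L <= d)%N /\ forall z, Zgen rho kap r z ->
        \sum_(g in Sym A) \prod_(v in Smo mo) z (act g v) = evalI z L.
      apply: (mono_case rk_inj act_rho act_kap Hb).
      by rewrite -(Hs mo (mem_head _ _)) card_Smo.
    have [L2 [HL2 HE2]] := IH (fun m ms => Hs m (@mem_behead _ (mo :: s) m ms)).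
    exists (q@_mo *: L1 + L2); split.
      apply: leq_trans (msizeD_le _ _) _; rewrite geq_max HL2 andbT.
      exact: leq_trans (msizeZ_le _ _) HL1.
    by move=> z Hz; rewrite big_cons evalID evalIZ HE1 // HE2.
  have [L [HL HE]] := Hs (msupp q) (fun mo mon => (dhomogP _ _ _ (introT idP Hq)) mo mon).
  exists L; split; first exact: HL.
  move=> z Hz; rewrite -(HE z Hz).
  rewrite evalI_sum (eq_bigr (fun g => \sum_(mo <- msupp q) q@_mo * \prod_(v in Smo mo) z (act g v))); last first.
    move=> g _; rewrite evalI_rename {1}[q]mpolyE evalI_sum; apply: eq_bigr => mo _.
    rewrite evalIZ evalI_mono //.
    by move=> v; case: Hz => H _ _ _; apply: H.
  rewrite exchange_big /=; apply: eq_bigr => mo _; by rewrite mulr_sumr.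
apply: (in_gr_lower HP HL) => z Hz; by rewrite evalIB HE // subrr.
Qed.

End Core2.

Fixpoint box_row (la : seq nat) (k : nat) : nat :=
  match la with
  | [::] => k
  | a :: la' => if (k < a)%N then 0%N else (box_row la' (k - a)).+1
  end.

Lemma box_inj la k l : (k < sumn la)%N -> (l < sumn la)%N -> k != l ->
  box_col la k = box_col la l -> box_row la k != box_row la l.
Proof.
elim: la k l => [|a la IH] k l //= Hk Hl kl.
case: ltnP => ka; case: ltnP => la' //=.
- by move=> E; rewrite E eqxx in kl.
- by move=> E; rewrite eqSS; apply: IH => //; lia.
Qed.

Lemma box_row0 la k : (k < head 0%N la)%N -> box_row la k = 0%N.
Proof. by case: la => [|a la] //= ->. Qed.

Lemma head_sumn la : (head 0%N la <= sumn la)%N.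
Proof. by case: la => [|a la] //=; rewrite leq_addr. Qed.

Section Specht.
Variables (n : nat) (la : seq nat).
Hypothesis Hn : sumn la = n.
Definition yla (k : 'I_n) : algC := (box_row la k)%:R.
Definition Arow := [set k : 'I_n | (k < head 0%N la)%N].

Lemma specht_nz : specht_poly la yla 1 != 0.
Proof.
rewrite /specht_poly; apply/prodf_neq0 => k _; apply/prodf_neq0 => l /andP[kl /eqP cl].
rewrite !perm1 subr_eq0 /yla eqr_nat; apply: box_inj => //; rewrite ?Hn ?ltn_ord //.
by rewrite neq_ltn kl.
Qed.

Lemma specht_sym s : s \in Sym Arow -> specht_poly la yla s = specht_poly la yla 1.
Proof.
rewrite inE => sA.
have ys k : yla (s k) = yla k.
  have [kA|kA] := boolP (k \in Arow); last by rewrite (out_perm sA kA).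
  have skA : s k \in Arow by rewrite (perm_closed _ sA).
  by move: kA skA; rewrite /yla !inE => /box_row0 -> /box_row0 ->.
by rewrite /specht_poly; apply: eq_bigr => k _; apply: eq_bigr => l _; rewrite !perm1 !ys.
Qed.

Lemma card_Arow : (head 0%N la <= #|Arow|)%N.
Proof.
have Ha : (head 0%N la <= n)%N by rewrite -Hn head_sumn.
have winj : injective (widen_ord Ha) by move=> i j /(congr1 val) /= /val_inj.
have := card_imset (mem 'I_(head 0%N la)) winj.
rewrite card_ord => <-; apply: subset_leq_card; apply/subsetP => k /imsetP [i _ ->].
by rewrite inE /= ltn_ord.
Qed.

End Specht.

Section SP.
Variables (I : finType) (k : nat) (la : seq nat).

Lemma evalI_specht (z : I -> algC) (v : 'I_k -> I) s :
  evalI z (specht_poly la (fun i => var (v i)) s) = specht_poly la (fun i => z (v i)) s.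
Proof.
rewrite /specht_poly evalI_prod; apply: eq_bigr => a _.
by rewrite evalI_prod; apply: eq_bigr => b _; rewrite evalIB !evalI_var.
Qed.

Lemma rename_specht (F : I -> I) (v : 'I_k -> I) s :
  rename F (specht_poly la (fun i => var (v i)) s) = specht_poly la (fun i => var (F (v i))) s.
Proof.
rewrite /specht_poly rename_prod; apply: eq_bigr => a _.
by rewrite rename_prod; apply: eq_bigr => b _; rewrite renameB !rename_var.
Qed.

Lemma specht_perm (v : 'I_k -> I) (g s : {perm 'I_k}) :
  specht_poly la (fun i => var (v (g i))) s = specht_poly la (fun i => var (v i)) (s * g)%g.
Proof. by rewrite /specht_poly; apply: eq_bigr => a _; apply: eq_bigr => b _; rewrite !permM. Qed.

End SP.

Lemma in_gr_mono (I : finType) (J J' : polyI I -> Prop) p :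
  (forall q, J q -> J' q) -> in_gr J p -> in_gr J' p.
Proof.
move=> H [s [Hs ->]]; exists s; split => // q qs.
by have [Jq q0] := Hs q qs; split => //; apply: H.
Qed.

Section Assembly.
Variables (n m : nat) (la mu : seq nat).
Local Notation spl s := (specht_poly la (fun i => var (inl i : YZVar n m)) s).
Local Notation spm t := (specht_poly mu (fun j => var (inr j : YZVar n m)) t).

Lemma st_sum (P : pred {perm 'I_n}) (Q : pred {perm 'I_m}) :
  specht_tensor la mu (\sum_(s | P s) \sum_(t | Q t) (spl s * spm t)).
Proof.
exists (fun s t => ((P s) && (Q t))%:R); rewrite [LHS]big_mkcond /=.
apply: eq_bigr => s _; rewrite big_mkcond /=; case: (P s) => /=.
  by apply: eq_bigr => t _; case: (Q t); rewrite ?scale1r ?scale0r.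
by rewrite big1 // => t _; rewrite scale0r.
Qed.

Lemma yzact_w (g : {perm 'I_n}) (h : {perm 'I_m}) s t :
  yzact g h (spl s * spm t) = spl (s * g)%g * spm (t * h)%g.
Proof.
rewrite /yzact renameM !rename_specht /=.
by rewrite (specht_perm _ (fun i => inl i : YZVar n m)) (specht_perm _ (fun j => inr j : YZVar n m)).
Qed.

Definition z0 (v : YZVar n m) : algC :=
  match v with inl i => (box_row la i)%:R | inr j => (box_row mu j)%:R end.

Lemma evalI_w s t : evalI z0 (spl s * spm t) =
  specht_poly la (yla la (n:=n)) s * specht_poly mu (yla mu (n:=m)) t.
Proof. by rewrite evalIM !evalI_specht. Qed.

End Assembly.

Section Rook2.
Variables (n m r : nat).

Lemma rook_Zgen_rows (M : 'M[algC]_(n, m)) : @rook_placement n m r M ->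
  Zgen (fun ij : MatVar n m => ij.1) (fun ij : MatVar n m => ij.2) r (fun ij => M ij.1 ij.2).
Proof.
case=> H01 Hc Hrow Hcol; split => //.
- move=> t; have -> : [set v : MatVar n m | (v.1 == t) && (M v.1 v.2 == 1)] =
      (fun j => (t, j)) @: [set j | M t j == 1].
    apply/setP => [[i j]]; rewrite !inE /=; apply/idP/imsetP.
      by case/andP => /eqP -> Mj; exists j; rewrite ?inE.
    by case=> j' Mj [-> ->]; rewrite eqxx; rewrite inE in Mj.
  by rewrite card_imset // => a b [].
- move=> u; have -> : [set v : MatVar n m | (v.2 == u) && (M v.1 v.2 == 1)] =
      (fun i => (i, u)) @: [set i | M i u == 1].
    apply/setP => [[i j]]; rewrite !inE /=; apply/idP/imsetP.
      by case/andP => /eqP -> Mj; exists i; rewrite ?inE.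
    by case=> i' Mj [-> ->]; rewrite eqxx; rewrite inE in Mj.
  by rewrite card_imset // => a b [].
Qed.

Lemma rook_Zgen_cols (M : 'M[algC]_(n, m)) : @rook_placement n m r M ->
  Zgen (fun ij : MatVar n m => ij.2) (fun ij : MatVar n m => ij.1) r (fun ij => M ij.1 ij.2).
Proof. by case/rook_Zgen_rows => H1 H2 H3 H4; split. Qed.

End Rook2.


Theorem mainTheorem8 (n m r d : nat) (la mu : seq nat) :
  (d <= r)%N -> (r <= minn m n)%N ->
  is_partition n la -> is_partition m mu ->
  occurs_in_R (@rook_placement n m r) d la mu ->
  (head 0%N la <= n + m - d - r)%N /\ (head 0%N mu <= n + m - d - r)%N.
Proof.
move=> dr rmn /and3P[_ _ /eqP Hla] /and3P[_ _ /eqP Hmu] [f [Hh He Hnz]].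
have rm : (r <= m)%N by move: rmn; rewrite leq_min => /andP[].
have rn : (r <= n)%N by move: rmn; rewrite leq_min => /andP[].
pose spl s := specht_poly la (fun i => var (inl i : YZVar n m)) s.
pose spm t := specht_poly mu (fun j => var (inr j : YZVar n m)) t.
pose w1 := spl 1%g * spm 1%g.
have Hw1 : specht_tensor la mu w1.
  have := @st_sum n m la mu (pred1 1%g) (pred1 1%g).
  by rewrite (big_pred1 1%g) // (big_pred1 1%g).
have nzw (P : pred {perm 'I_n}) (Q : pred {perm 'I_m}) :
    (forall s, P s -> specht_poly la (@yla n la) s = specht_poly la (@yla n la) 1%g) ->
    (forall t, Q t -> specht_poly mu (@yla m mu) t = specht_poly mu (@yla m mu) 1%g) ->
    P 1%g -> Q 1%g ->
    \sum_(s | P s) \sum_(t | Q t) (spl s * spm t) != 0.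
  move=> HP HQ P1 Q1; apply/eqP => /(congr1 (evalI (@z0 n m la mu))).
  rewrite /evalI meval0 -/(evalI _ _) evalI_sum.
  set c := specht_poly la (@yla n la) 1%g * specht_poly mu (@yla m mu) 1%g.
  have E s : P s -> evalI (z0 la mu) (\sum_(t | Q t) (spl s * spm t)) = \sum_(t | Q t) c.
    move=> Ps; rewrite evalI_sum; apply: eq_bigr => t Qt.
    by rewrite /spl /spm evalI_w HP // HQ.
  rewrite (eq_bigr _ E) !sumr_const => /eqP; rewrite !mulrn_eq0.
  have P0 : (0 < #|P|)%N by apply/card_gt0P; exists 1%g.
  have Q0 : (0 < #|Q|)%N by apply/card_gt0P; exists 1%g.
  have c0 : c != 0 by rewrite mulf_neq0 // specht_nz.
  by case/or3P => /eqP E0; [move: P0|move: Q0|move: c0]; rewrite E0 ?eqxx.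
split; rewrite leqNgt; apply/negP => Hgt.
- set A := Arow n la.
  pose w0 := \sum_(s | s \in Sym A) \sum_(t | t == 1%g) (spl s * spm t).
  have Hw0 : specht_tensor la mu w0 by apply: st_sum.
  have Ew0 : w0 = \sum_(g in Sym A) yzact g 1%g w1.
    rewrite /w0; apply: eq_bigr => g _; rewrite big_pred1_eq /w1 /spl /spm yzact_w.
    by rewrite !mul1g.
  pose act (g : {perm 'I_n}) (ij : MatVar n m) := (g ij.1, ij.2).
  have fw0 : f w0 = \sum_(g in Sym A) rename (act g) (f w1).
    rewrite Ew0 linear_sum; apply: eq_bigr => g _; rewrite He //.
    by rewrite /matact; apply: rename_ext => ij; rewrite perm1.
  have Hb : (#|'I_n| - #|A| + (#|'I_m| - d) < r)%N.
    have := card_Arow Hla; have := max_card A; rewrite !card_ord -/A; lia.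
  have Hgr := @core_gr _ _ _ (fun ij : MatVar n m => ij.1) (fun ij : MatVar n m => ij.2) act
    (fun v w E1 E2 => injective_projections _ _ E1 E2) (fun _ _ => erefl) (fun _ _ => erefl)
    r d A Hb (f w1) (Hh _ Hw1).
  apply: (Hnz w0 Hw0).
    apply: (nzw (fun s => s \in Sym A) (fun t => t == 1%g)).
    - by move=> s sA; exact: specht_sym.
    - by move=> t /eqP ->.
    - exact: group1.
    - by [].
  rewrite fw0; apply: in_gr_mono Hgr => p Hp M HM.
  by apply: Hp; apply: rook_Zgen_rows.
- set B := Arow m mu.
  pose w0 := \sum_(s | s == 1%g) \sum_(t | t \in Sym B) (spl s * spm t).
  have Hw0 : specht_tensor la mu w0 by apply: st_sum.
  have Ew0 : w0 = \sum_(h in Sym B) yzact 1%g h w1.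
    rewrite /w0 big_pred1_eq; apply: eq_bigr => h _; rewrite /w1 /spl /spm yzact_w.
    by rewrite !mul1g.
  pose act (h : {perm 'I_m}) (ij : MatVar n m) := (ij.1, h ij.2).
  have fw0 : f w0 = \sum_(h in Sym B) rename (act h) (f w1).
    rewrite Ew0 linear_sum; apply: eq_bigr => h _; rewrite He //.
    by rewrite /matact; apply: rename_ext => ij; rewrite perm1.
  have Hb : (#|'I_m| - #|B| + (#|'I_n| - d) < r)%N.
    have := card_Arow Hmu; have := max_card B; rewrite !card_ord -/B; lia.
  have Hgr := @core_gr _ _ _ (fun ij : MatVar n m => ij.2) (fun ij : MatVar n m => ij.1) act
    (fun v w E1 E2 => injective_projections _ _ E2 E1) (fun _ _ => erefl) (fun _ _ => erefl)
    r d B Hb (f w1) (Hh _ Hw1).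
  apply: (Hnz w0 Hw0).
    apply: (nzw (fun s => s == 1%g) (fun t => t \in Sym B)).
    - by move=> s /eqP ->.
    - by move=> t tB; exact: specht_sym.
    - by [].
    - exact: group1.
  rewrite fw0; apply: in_gr_mono Hgr => p Hp M HM.
  by apply: Hp; apply: rook_Zgen_cols.
Qed.
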